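(* Let $G(V)$ be a network, $\varepsilon>0$, and $S\subseteq V$ with $|S|\ge2$ such that $R_{\mathrm{eff}}(u,v)\ge\varepsilon$ for all distinct $u,v\in S$. Then there is $S'\subseteq S$ with $|S'|\ge|S|/2$ such that $R_{\mathrm{eff}}(v,S\setminus\{v\})\ge\varepsilon/4$ for every $v\in S'$.
   Context: A network is a finite connected graph $G=(V,E)$ with symmetric conductances $c_{xy}\ge0$, $c_{xy}>0$ iff $xy\in E$; $R_{\mathrm{eff}}$ is effective resistance. For $v\in V$ and nonempty $T\subseteq V\setminus\{v\}$, $R_{\mathrm{eff}}(v,T)$ is the effective resistance between $v$ and the vertex obtained by identifying all vertices of $T$ into one vertex (conductances from $x$ to the glued vertex being $\sum_{y\in T}c_{xy}$). *)

(* Defs.v *)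
From HB Require Import structures.
From mathcomp Require Import all_boot all_order all_algebra.
From Stdlib Require Import ClassicalEpsilon.
Set Implicit Arguments. Unset Strict Implicit. Unset Printing Implicit Defensive.
Import Order.TTheory GRing.Theory Num.Theory.
Local Open Scope ring_scope.

(* A network on the finite vertex type V: conductances c, with
   c x y > 0 iff xy is an edge.  The graph is finite, loopless,
   the conductances symmetric and nonnegative, and the graph connected. *)
Definition network (R : realFieldType) (V : finType) (c : V -> V -> R) : Prop :=
  [/\ forall x y, c x y = c y x,
      forall x y, 0 <= c x y,
      forall x, c x x = 0
    & forall x y, connect (fun u w => 0 < c u w) x y].

(* This is exactly the voltage on the network in which T is glued
   into a single vertex (conductance from x to the glued vertex being
   sum_{y in T} c x y). *)
Definition unit_potential (R : realFieldType) (V : finType) (c : V -> V -> R)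
  (a : V) (T : {set V}) (f : {ffun V -> R}) : Prop :=
  [/\ f a = 1,
      forall b, b \in T -> f b = 0
    & forall x, x != a -> x \notin T -> \sum_(y : V) c x y * (f y - f x) = 0].

(* The (unique, for a connected network and nonempty T not containing a)
   unit potential, selected by choice. *)
Definition potential (R : realFieldType) (V : finType) (c : V -> V -> R)
  (a : V) (T : {set V}) : {ffun V -> R} :=
  epsilon (inhabits [ffun => 0]) (unit_potential c a T).

(* Effective resistance R_eff(a, T) = 1 / (current out of a under unit voltage). *)
Definition Reff (R : realFieldType) (V : finType) (c : V -> V -> R)
  (a : V) (T : {set V}) : R :=
  (\sum_(y : V) c a y * (potential c a T a - potential c a T y))^-1.

(* Main.v *)
Require Import Defs.
From HB Require Import structures.
From mathcomp Require Import all_boot all_order all_algebra.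
From Stdlib Require Import ClassicalEpsilon Lia.
Set Implicit Arguments. Unset Strict Implicit. Unset Printing Implicit Defensive.
Import Order.TTheory GRing.Theory Num.Theory.
Local Open Scope ring_scope.

Definition lap (R : realFieldType) (V : finType) (c : V -> V -> R) (f : V -> R) (x : V) : R :=
  \sum_(y : V) c x y * (f y - f x).

Lemma lap_sum (R : realFieldType) (V : finType) (c : V -> V -> R) (f : V -> R) :
  (forall x y, c x y = c y x) -> \sum_x lap c f x = 0.
Proof.
move=> sym; rewrite /lap.
have -> : \sum_x \sum_y c x y * (f y - f x) =
   \sum_x \sum_y c x y * f y - \sum_x \sum_y c x y * f x.
  rewrite -sumrB; apply: eq_bigr => x _; rewrite -sumrB.
  by apply: eq_bigr => y _; rewrite mulrBr.
rewrite exchange_big /=; apply/eqP; rewrite subr_eq0; apply/eqP.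
by apply: eq_bigr => y _; apply: eq_bigr => x _; rewrite sym.
Qed.

Lemma green (R : realFieldType) (V : finType) (c : V -> V -> R) (f g : V -> R) :
  (forall x y, c x y = c y x) ->
  \sum_x g x * lap c f x = \sum_x f x * lap c g x.
Proof.
move=> sym; rewrite /lap.
have E : forall f g : V -> R, \sum_x g x * \sum_y c x y * (f y - f x) =
   \sum_x \sum_y c x y * (g x * f y) - \sum_x \sum_y c x y * (g x * f x).
  move=> f1 g1; rewrite -sumrB; apply: eq_bigr => x _; rewrite -sumrB mulr_sumr.
  by apply: eq_bigr => y _; rewrite mulrCA !mulrBr.
rewrite !E; congr (_ - _).
  rewrite exchange_big /=; apply: eq_bigr => y _; apply: eq_bigr => x _.
  by rewrite (sym x y) [g x * _]mulrC.
by apply: eq_bigr => x _; apply: eq_bigr => y _; rewrite [g x * _]mulrC.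
Qed.

Lemma lapB (R : realFieldType) (V : finType) (c : V -> V -> R) (f g : V -> R) x :
  lap c (fun y => f y - g y) x = lap c f x - lap c g x.
Proof.
rewrite /lap -sumrB; apply: eq_bigr => y _; rewrite -mulrBr; congr (_ * _).
by rewrite !opprB addrACA [RHS]addrACA [- f x + _]addrC.
Qed.

Lemma lapZ (R : realFieldType) (V : finType) (c : V -> V -> R) (f : V -> R) a x :
  lap c (fun y => a * f y) x = a * lap c f x.
Proof.
rewrite /lap mulr_sumr; apply: eq_bigr => y _.
by rewrite -mulrBr mulrCA.
Qed.

Lemma minprin (R : realFieldType) (V : finType) (c : V -> V -> R) (f : V -> R)
  (A : {set V}) a m : network c -> a \in A ->
  (forall x, x \notin A -> lap c f x = 0) -> (forall x, x \in A -> m <= f x) ->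
  forall x, m <= f x.
Proof.
move=> [sym pos c0 conn] aA harm bnd x.
case: (@arg_minP _ R V a predT f isT) => x0 _ minx0.
have [mle|] := leP m (f x0); first exact: le_trans mle (minx0 x isT).
move=> fx0m.
have one : forall u w, 0 < c u w -> f u = f x0 -> f w = f x0.
  move=> u w cuw fu.
  have uA : u \notin A.
    by apply/negP => /bnd; rewrite fu => /(lt_le_trans fx0m); rewrite ltxx.
  have := harm u uA; rewrite /lap => H.
  have ge : forall y, predT y -> 0 <= c u y * (f y - f u).
    by move=> y _; rewrite mulr_ge0 // subr_ge0 fu minx0.
  have /eqP := (@psumr_eq0P _ _ predT (fun y => c u y * (f y - f u)) ge H w isT).
  by rewrite mulf_eq0 (gt_eqF cuw) /= subr_eq0 fu => /eqP.
have cl : closed (fun u w => 0 < c u w) [pred y | f y == f x0].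
  move=> u w cuw; rewrite !inE; apply/eqP/eqP; first exact: one.
  by apply: one; rewrite sym.
have := closed_connect cl (conn x0 a); rewrite !inE eqxx => /esym/eqP fa.
by have := bnd a aA; rewrite fa => /(lt_le_trans fx0m); rewrite ltxx.
Qed.

Lemma harm_zero (R : realFieldType) (V : finType) (c : V -> V -> R) (f : V -> R)
  (A : {set V}) a : network c -> a \in A ->
  (forall x, x \notin A -> lap c f x = 0) -> (forall x, x \in A -> f x = 0) ->
  forall x, f x = 0.
Proof.
move=> net aA harm bnd x; apply/eqP; rewrite eq_le; apply/andP; split; last first.
  by apply: (minprin net aA harm) => y /bnd ->.
have H : forall y, 0 <= - f y.
  apply: (minprin (f := fun y => - f y) net aA).
    by move=> y /harm H; rewrite -[RHS]oppr0 -H /lap -sumrN; apply: eq_bigr => z _;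
      rewrite -mulrN opprB opprK addrC.
  by move=> y /bnd ->; rewrite oppr0.
by rewrite -oppr_ge0 H.
Qed.

Definition coef (R : realFieldType) (V : finType) (c : V -> V -> R) (B : {set V}) (z x : V) : R :=
  if x \in B then (z == x)%:R else c x z - (z == x)%:R * \sum_y c x y.

Lemma coef_sum (R : realFieldType) (V : finType) (c : V -> V -> R) (B : {set V}) (u : V -> R) x :
  \sum_z u z * coef c B z x = if x \in B then u x else lap c u x.
Proof.
rewrite /coef; case: ifP => _.
  rewrite (bigD1 x) //= eqxx mulr1 big1 ?addr0 // => z /negbTE ->; exact: mulr0.
rewrite /lap.
have -> : \sum_z u z * (c x z - (z == x)%:R * \sum_y c x y) =
   \sum_z c x z * u z - \sum_z (z == x)%:R * (u z * \sum_y c x y).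
  rewrite -sumrB; apply: eq_bigr => z _; rewrite mulrBr mulrC; congr (_ - _).
  by rewrite mulrCA.
rewrite [X in _ - X](bigD1 x) //= eqxx mul1r [X in _ - (_ + X)]big1 ?addr0; last first.
  by move=> z /negbTE ->; rewrite mul0r.
rewrite mulr_sumr -sumrB; apply: eq_bigr => y _; rewrite mulrBr; congr (_ - _).
by rewrite mulrC.
Qed.

Lemma dirichlet (R : realFieldType) (V : finType) (c : V -> V -> R) (B : {set V}) b0
  (bv : V -> R) : network c -> b0 \in B ->
  exists u : {ffun V -> R},
    (forall x, x \in B -> u x = bv x) /\ (forall x, x \notin B -> lap c u x = 0).
Proof.
move=> net bB.
pose M : 'M[R]_#|V| := \matrix_(i, j) coef c B (enum_val i) (enum_val j).
have key : forall r : 'rV[R]_#|V|, forall x,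
    (r *m M) 0 (enum_rank x) =
    if x \in B then r 0 (enum_rank x) else lap c (fun y => r 0 (enum_rank y)) x.
  move=> r x; rewrite -(coef_sum c B (fun y => r 0 (enum_rank y))) mxE.
  rewrite (reindex (@enum_val V predT)); last first.
    by apply: onW_bij; exact: enum_val_bij.
  apply: eq_bigr => i _; rewrite mxE enum_valK enum_rankK; done.
have free : row_free M.
  rewrite -kermx_eq0; apply/negPn/negP => /rowV0Pn [v /sub_kermxP vM vn0].
  move/negP: vn0; apply; apply/eqP/rowP => i; rewrite mxE.
  have H := harm_zero (f := fun y => v 0 (enum_rank y)) net bB.
  rewrite -(enum_valK i); apply: H.
    by move=> x xB; have := key v x; rewrite vM mxE (negbTE xB).
  by move=> x xB; have := key v x; rewrite vM mxE xB.
have unitM : M \in unitmx by rewrite -row_free_unit.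
pose t : 'rV[R]_#|V| := \row_j (if (enum_val j : V) \in B then bv (enum_val j) else 0).
pose r := t *m invmx M.
have rM : r *m M = t by rewrite -mulmxA mulVmx // mulmx1.
exists [ffun x => r 0 (enum_rank x)]; split.
  move=> x xB; rewrite ffunE; have := key r x; rewrite rM mxE enum_rankK xB.
  by move=> <-.
move=> x xB; have := key r x; rewrite rM mxE enum_rankK (negbTE xB) => H.
rewrite /lap; under eq_bigr do rewrite !ffunE; by rewrite -[LHS]/(lap _ _ _) -H.
Qed.

Lemma lapN (R : realFieldType) (V : finType) (c : V -> V -> R) (f : V -> R) x :
  lap c (fun y => - f y) x = - lap c f x.
Proof.
by rewrite /lap -sumrN; apply: eq_bigr => z _; rewrite -mulrN opprB opprK addrC.
Qed.

Lemma lapC (R : realFieldType) (V : finType) (c : V -> V -> R) (k : R) x :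
  lap c (fun _ => k) x = 0.
Proof. by rewrite /lap big1 // => y _; rewrite subrr mulr0. Qed.

Lemma maxprin (R : realFieldType) (V : finType) (c : V -> V -> R) (f : V -> R)
  (A : {set V}) a m : network c -> a \in A ->
  (forall x, x \notin A -> lap c f x = 0) -> (forall x, x \in A -> f x <= m) ->
  forall x, f x <= m.
Proof.
move=> net aA harm bnd x; rewrite -lerN2.
apply: (minprin (f := fun y => - f y) net aA) => y yA.
  by rewrite lapN harm // oppr0.
by rewrite lerN2 bnd.
Qed.

Lemma harm_const (R : realFieldType) (V : finType) (c : V -> V -> R) (f : V -> R) :
  network c -> (forall x, lap c f x = 0) -> forall x y, f x = f y.
Proof.
move=> net harm x y; apply/eqP; rewrite -subr_eq0; apply/eqP.
apply: (harm_zero (f := fun z => f z - f y) (A := [set y]) net (set11 y)).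
  by move=> z _; rewrite lapB harm lapC subr0.
by move=> z; rewrite inE => /eqP ->; rewrite subrr.
Qed.

Lemma pot_spec (R : realFieldType) (V : finType) (c : V -> V -> R) a (T : {set V}) t :
  network c -> t \in T -> a \notin T -> unit_potential c a T (potential c a T).
Proof.
move=> net tT aT; rewrite /potential; apply: epsilon_spec.
have [u [ub uh]] := dirichlet (B := a |: T) (fun x => if x == a then 1 else 0) net
  (setU11 a T).
exists u; split.
- by rewrite ub ?setU11 // eqxx.
- move=> b bT; rewrite ub; last by rewrite inE bT orbT.
  by case: eqP => // ba; move: aT; rewrite -ba bT.
- move=> x xa xT; apply: uh; rewrite !inE; apply/norP; split=> //.
Qed.

Lemma up_nonneg (R : realFieldType) (V : finType) (c : V -> V -> R) a (T : {set V}) f :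
  network c -> unit_potential c a T f -> forall x, 0 <= f x.
Proof.
move=> net [fa fT fh]; apply: (minprin (A := a |: T) net (setU11 a T)).
  by move=> x; rewrite in_setU1 negb_or => /andP[xa xT]; apply: fh.
move=> x; rewrite in_setU1 => /orP[/eqP -> | /fT ->]; by rewrite ?fa.
Qed.

Lemma up_current (R : realFieldType) (V : finType) (c : V -> V -> R) a (T : {set V}) t f :
  network c -> t \in T -> unit_potential c a T f -> 0 < - lap c f a.
Proof.
move=> net tT [fa fT fh].
have le1 : forall x, f x <= 1.
  apply: (maxprin (A := a |: T) (m := 1) net (setU11 a T)).
    by move=> x; rewrite in_setU1 negb_or => /andP[xa xT]; apply: fh.
  move=> x; rewrite in_setU1 => /orP[/eqP -> | /fT ->]; by rewrite ?fa ?ler01.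
have ge : 0 <= - lap c f a.
  rewrite /lap -sumrN sumr_ge0 // => y _; rewrite -mulrN opprB fa mulr_ge0 //.
    by case: net => _ ->.
  by rewrite subr_ge0.
rewrite lt_def ge andbT; apply/negP => /eqP H.
suff : f a <= 0 by rewrite fa ler10.
apply: (maxprin (A := T) (m := 0) net tT).
  move=> x xT; case: (eqVneq x a) => [->|xa]; last exact: fh.
  by rewrite -[LHS]opprK H oppr0.
by move=> x /fT ->.
Qed.

Lemma Reff_lap (R : realFieldType) (V : finType) (c : V -> V -> R) a (T : {set V}) :
  Reff c a T = (- lap c (potential c a T) a)^-1.
Proof.
rewrite /Reff /lap -sumrN; congr (_^-1); apply: eq_bigr => y _.
by rewrite -mulrN opprB.
Qed.

Definition gfun (R : realFieldType) (V : finType) (c : V -> V -> R) (r u : V) : V -> R :=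
  fun x => if u == r then 0 else
    (- lap c (potential c u [set r]) u)^-1 * potential c u [set r] x.

Lemma gfun_lap (R : realFieldType) (V : finType) (c : V -> V -> R) r u x :
  network c -> lap c (gfun c r u) x = (x == r)%:R - (x == u)%:R.
Proof.
move=> net; rewrite /gfun; case: (eqVneq u r) => [->|ur].
  by rewrite lapC subrr.
have rT : r \in [set r] by rewrite set11.
have uT : u \notin [set r] by rewrite inE.
have sp := pot_spec net rT uT.
have Ipos := up_current net rT sp.
set f := potential c u [set r] in sp Ipos *.
rewrite lapZ.
case: sp => fu fT fh.
have lr : lap c f r = - lap c f u.
  have := lap_sum f (let: And4 s _ _ _ := net in s).
  rewrite (bigD1 u) //= (bigD1 r) //=; last by rewrite eq_sym.
  rewrite big1 ?addr0; last first.
    move=> y /andP[yu yr]; apply: fh => //; by rewrite inE.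
  by move/eqP; rewrite addrC addr_eq0 => /eqP.
case: (eqVneq x u) => [->|xu].
  by rewrite (negbTE ur) sub0r -[X in _ * X]opprK mulrN mulVf // gt_eqF.
case: (eqVneq x r) => [->|xr].
  by rewrite ?eqxx subr0 lr mulVf // gt_eqF.
by rewrite subrr -[lap c f x]/(\sum_y c x y * (f y - f x)) fh ?mulr0 // inE.
Qed.

Lemma gfun_Reff (R : realFieldType) (V : finType) (c : V -> V -> R) v w :
  network c -> v != w -> Reff c v [set w] = gfun c w v v - gfun c w v w.
Proof.
move=> net vw; rewrite /gfun (negbTE vw).
have wT : w \in [set w] by rewrite set11.
have vT : v \notin [set w] by rewrite inE.
have [fv fT _] := pot_spec net wT vT.
by rewrite Reff_lap fv fT // mulr0 subr0 mulr1.
Qed.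

Lemma diffswap (R : zmodType) (p q s t : R) : p - s = q - t -> s - t = p - q.
Proof. by move=> H; rewrite -[s](subKr p) H opprB addrA addrAC addrK. Qed.
Lemma cancel3 (R : zmodType) (a b e : R) : a - b - (a - e) - (e - b) = 0.
Proof. by apply/eqP; rewrite subr_eq0 opprB addrC addrA subrK. Qed.

Lemma gfun_diff (R : realFieldType) (V : finType) (c : V -> V -> R) r v w :
  network c -> v != w ->
  Reff c v [set w] = (gfun c r v v - gfun c r w v) - (gfun c r v w - gfun c r w w).
Proof.
move=> net vw; rewrite gfun_Reff //.
pose d x := (gfun c r v x - gfun c r w x) - gfun c w v x.
have hd : forall x, lap c d x = 0.
  by move=> x; rewrite /d lapB lapB !gfun_lap // cancel3.
exact: diffswap (harm_const net hd v w).
Qed.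

Lemma sum_delta (R : realFieldType) (V : finType) (F : V -> R) a :
  \sum_x F x * (x == a)%:R = F a.
Proof.
rewrite (bigD1 a) //= eqxx mulr1 big1 ?addr0 // => x /negbTE ->; exact: mulr0.
Qed.

Lemma other_in (V : finType) (S : {set V}) v : (2 <= #|S|)%N -> exists t, t \in S :\ v.
Proof.
move=> hS; apply/set0Pn; rewrite -card_gt0.
have := cardsD1 v S; case: (v \in S) => /= E; move: hS; rewrite E.
  by rewrite add1n ltnS.
by rewrite add0n; apply: leq_trans.
Qed.


Lemma hspec (R : realFieldType) (V : finType) (c : V -> V -> R) (S : {set V}) v :
  network c -> (2 <= #|S|)%N -> unit_potential c v (S :\ v) (potential c v (S :\ v)).
Proof.
move=> net hS; have [t tS] := other_in v hS.
by apply: (pot_spec net tS); rewrite !inE eqxx.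
Qed.

Lemma hval (R : realFieldType) (V : finType) (c : V -> V -> R) (S : {set V}) v w :
  network c -> (2 <= #|S|)%N -> w \in S ->
  potential c v (S :\ v) w = (w == v)%:R.
Proof.
move=> net hS wS; have [hv hT _] := hspec v net hS.
case: (eqVneq w v) => [->|wv]; first by rewrite hv.
by rewrite hT // !inE wv.
Qed.

Lemma Koff (R : realFieldType) (V : finType) (c : V -> V -> R) (S : {set V}) v x :
  network c -> (2 <= #|S|)%N -> v \in S -> x \notin S ->
  lap c (potential c v (S :\ v)) x = 0.
Proof.
move=> net hS vS xS; have [_ _ hh] := hspec v net hS.
apply: hh; last by rewrite !inE (negbTE xS) andbF.
by apply: contraNneq xS => ->.
Qed.

Lemma KsumS (R : realFieldType) (V : finType) (c : V -> V -> R) (S : {set V}) v :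
  network c -> (2 <= #|S|)%N -> v \in S ->
  \sum_(w in S) lap c (potential c v (S :\ v)) w = 0.
Proof.
move=> net hS vS; rewrite big_mkcond /= -[RHS](lap_sum (potential c v (S :\ v))
  (let: And4 s _ _ _ := net in s)).
apply: eq_bigr => x _; case: ifP => // /negbT xS; by rewrite Koff.
Qed.

Lemma Knonneg (R : realFieldType) (V : finType) (c : V -> V -> R) (S : {set V}) v w :
  network c -> (2 <= #|S|)%N -> w \in S -> w != v ->
  0 <= lap c (potential c v (S :\ v)) w.
Proof.
move=> net hS wS wv; rewrite /lap hval // (negbTE wv).
apply: sumr_ge0 => y _; rewrite subr0 mulr_ge0 //; first by case: net => _ ->.
exact: (up_nonneg net (hspec v net hS)).
Qed.

Lemma sum_h (R : realFieldType) (V : finType) (c : V -> V -> R) (S : {set V}) w (F : V -> R) :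
  network c -> (2 <= #|S|)%N -> w \in S -> (forall x, x \notin S -> F x = 0) ->
  \sum_x potential c w (S :\ w) x * F x = F w.
Proof.
move=> net hS wS F0; rewrite -[RHS](sum_delta F); apply: eq_bigr => x _.
case: (boolP (x \in S)) => xS; first by rewrite hval // mulrC.
by rewrite F0 // mulr0 mul0r.
Qed.

Lemma Ksym (R : realFieldType) (V : finType) (c : V -> V -> R) (S : {set V}) v w :
  network c -> (2 <= #|S|)%N -> v \in S -> w \in S ->
  lap c (potential c v (S :\ v)) w = lap c (potential c w (S :\ w)) v.
Proof.
move=> net hS vS wS.
rewrite -(sum_h net hS wS (F := lap c (potential c v (S :\ v)))); last first.
  by move=> x xS; rewrite Koff.
rewrite green; last by case: net.
by rewrite sum_h // => x xS; rewrite Koff.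
Qed.

Lemma Kg (R : realFieldType) (V : finType) (c : V -> V -> R) (S : {set V}) r v :
  network c -> (2 <= #|S|)%N -> v \in S -> r \in S ->
  \sum_(w in S) lap c (potential c v (S :\ v)) w * (gfun c r v v - gfun c r v w)
  = (v != r)%:R.
Proof.
move=> net hS vS rS.
set K := lap c (potential c v (S :\ v)).
have -> : \sum_(w in S) K w * (gfun c r v v - gfun c r v w) =
   gfun c r v v * \sum_(w in S) K w - \sum_(w in S) gfun c r v w * K w.
  rewrite mulr_sumr -sumrB; apply: eq_bigr => w _.
  by rewrite mulrBr mulrC [K w * _]mulrC.
rewrite KsumS // mulr0 sub0r.
have -> : \sum_(w in S) gfun c r v w * K w = \sum_w gfun c r v w * K w.
  rewrite big_mkcond /=; apply: eq_bigr => x _; case: ifP => // /negbT xS.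
  by rewrite /K Koff // mulr0.
rewrite green; last by case: net.
under eq_bigr do rewrite gfun_lap // mulrBr.
rewrite sumrB !sum_delta hval // hval // eqxx.
by rewrite opprB eq_sym; case: (v == r); rewrite ?subrr ?subr0.
Qed.

Lemma subACA' (R : zmodType) (a b c d : R) : (a - b) - (c - d) = (a - c) - (b - d).
Proof. by rewrite !opprB addrACA [RHS]addrACA [- c + _]addrC. Qed.

Unset Implicit Arguments.
Theorem mainTheorem15 (R : realFieldType) (V : finType) (c : V -> V -> R)
  (eps : R) (S : {set V}) :
  network c -> 0 < eps -> (2 <= #|S|)%N ->
  (forall u v, u \in S -> v \in S -> u != v -> eps <= Reff c u [set v]) ->
  exists S' : {set V},
    [/\ S' \subset S, (#|S| <= 2 * #|S'|)%N
      & forall v, v \in S' -> eps / 4%:R <= Reff c v (S :\ v)].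
Proof.
move=> net epos hS hR.
have [r rS] : exists r, r \in S.
  by apply/set0Pn; rewrite -card_gt0; apply: leq_trans hS.
pose K v w := lap c (potential c v (S :\ v)) w.
pose C v := - K v v.
pose g := gfun c r.
pose D v w := (g v v - g v w) - (g w v - g w w).
have CRe : forall v, Reff c v (S :\ v) = (C v)^-1 by move=> v; rewrite Reff_lap.
have Cpos : forall v, v \in S -> 0 < C v.
  move=> v vS; have [t tS] := other_in v hS.
  exact: (up_current net tS (hspec v net hS)).
have DR : forall v w, v \in S -> w \in S -> v != w -> eps <= D v w.
  by move=> v w vS wS vw; rewrite /D subACA' -gfun_diff //; apply: hR.
have low : forall v, v \in S -> eps * C v <= \sum_(w in S) K v w * D v w.
  move=> v vS.
  have Cv : C v = \sum_(w in S | w != v) K v w.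
    have := KsumS net hS vS; rewrite (bigD1 v) //= => /eqP.
    by rewrite addrC addr_eq0 => /eqP ->.
  rewrite (bigD1 v) //= /D !subrr mulr0 add0r Cv mulr_sumr.
  apply: ler_sum => w /andP[wS wv]; rewrite mulrC ler_wpM2l //.
    exact: Knonneg.
  by apply: DR; rewrite // eq_sym.
have first : forall v, v \in S ->
    \sum_(w in S) K v w * (g v v - g v w) = (v != r)%:R.
  by move=> v vS; exact: Kg.
have cnt : \sum_(v in S) (v != r)%:R = #|S|%:R - 1 :> R.
  have E : forall v, (v != r)%:R = 1 - (v == r)%:R :> R.
    by move=> v; case: (v == r); rewrite ?subrr ?subr0.
  under eq_bigr do rewrite E.
  rewrite sumrB sumr_const (bigD1 r) //= eqxx big1 ?addr0 //.
  by move=> v /andP[_ /negbTE ->].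
have tot : \sum_(v in S) \sum_(w in S) K v w * D v w = 2%:R * (#|S|%:R - 1).
  have -> : \sum_(v in S) \sum_(w in S) K v w * D v w =
      \sum_(v in S) \sum_(w in S) K v w * (g v v - g v w)
    - \sum_(v in S) \sum_(w in S) K v w * (g w v - g w w).
    rewrite -sumrB; apply: eq_bigr => v _; rewrite -sumrB.
    by apply: eq_bigr => w _; rewrite mulrBr.
  have -> : \sum_(v in S) \sum_(w in S) K v w * (g w v - g w w) =
      - \sum_(w in S) (w != r)%:R.
    rewrite exchange_big /= -sumrN; apply: eq_bigr => w wS.
    rewrite -(first w wS) -sumrN; apply: eq_bigr => v vS.
    by rewrite /K Ksym // -mulrN opprB.
  rewrite opprK (eq_bigr _ first) cnt.
  by rewrite mulr_natl mulr2n.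
have bnd : eps * \sum_(v in S) C v <= 2%:R * (#|S|%:R - 1).
  by rewrite -tot mulr_sumr; apply: ler_sum => v vS; exact: low.
pose S' := [set v in S | eps / 4%:R <= Reff c v (S :\ v)].
have sub : S' \subset S by apply/subsetP => v; rewrite inE => /andP[].
exists S'; split => //; last by move=> v; rewrite inE => /andP[].
pose B := S :\: S'.
have Bbig : forall v, v \in B -> 4%:R < eps * C v.
  move=> v; rewrite !inE => /andP[nS' vS]; rewrite vS /= -ltNge CRe in nS'.
  move: nS'; rewrite ltr_pdivlMr ?ltr0n // mulrC ltr_pdivrMr //; exact: Cpos.
have sumB : 4%:R *+ #|B| <= eps * \sum_(v in S) C v.
  have -> : 4%:R *+ #|B| = \sum_(v in B) 4%:R :> R by rewrite sumr_const.
  rewrite mulr_sumr big_mkcond [X in _ <= X]big_mkcond /=.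
  apply: ler_sum => v _; case: ifP => vB.
    have vS : v \in S by move: vB; rewrite !inE => /andP[].
    by rewrite vS; apply: ltW; apply: Bbig.
  by case: ifP => vS //; rewrite mulr_ge0 // ltW // Cpos.
have H := le_trans sumB bnd.
have Hn : ((4 * #|B| + 2)%:R <= (2 * #|S|)%:R :> R).
  move: H; rewrite mulrBr mulr1 lerBrDr -mulr_natr.
  by rewrite natrD !natrM mulrC.
rewrite ler_nat in Hn.
have cS : #|S| = (#|S'| + #|B|)%N by rewrite -(cardsID S' S) (setIidPr sub).
move: Hn; rewrite cS => /ssrnat.leP Hn; apply/ssrnat.leP; rewrite -?plusE -?multE in Hn *.
lia.
Qed.
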